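(* Let $p$ be a prime, $k \geq 1$, $G_1, \dots, G_k$ finite-dimensional vector spaces over $\mathbb{F}_p$, and $f \colon G_1 \times \cdots \times G_k \to \mathbb{D}$. Let $c, \varepsilon > 0$ and suppose $\alpha, \alpha'$ are multilinear forms on $G_1 \times \cdots \times G_k$ such that $\operatorname{bias}(\alpha - \alpha') \geq c$ and $\alpha \in \operatorname{Spec}^{\mathrm{ml}}_{\varepsilon}(f)$. Then $\alpha' \in \operatorname{Spec}^{\mathrm{ml}}_{\varepsilon'}(f)$ for $\varepsilon' = \varepsilon\, p^{-O((\log_p c^{-1})^{O(1)})}$.
   Context: $\mathbb{D} = \{z \in \mathbb{C} : |z| \leq 1\}$, $\omega = e^{2\pi i/p}$, $\mathbb{E}$ is the uniform average. For a multilinear form $\beta$ on $G_1 \times \cdots \times G_k$, $\operatorname{bias}\beta = \mathbb{E}_{x_1 \in G_1, \dots, x_k \in G_k}\omega^{\beta(x_1, \dots, x_k)}$. The box norm of $g \colon G_1 \times \cdots \times G_k \to \mathbb{C}$ is given by $\|g\|_{\square^k}^{2^k} = \mathbb{E}_{x_1, y_1 \in G_1, \dots, x_k, y_k \in G_k} \prod_{I \subseteq [k]} \operatorname{Conj}^{|I|} g(x_I, y_{[k]\setminus I})$, where $(x_I, y_{[k]\setminus I})$ has $i$-th coordinate $x_i$ if $i \in I$ and $y_i$ otherwise, and $\operatorname{Conj}^j$ is complex conjugation applied $j$ times. The $\varepsilon$-large multilinear spectrum is $\operatorname{Spec}^{\mathrm{ml}}_{\varepsilon}(f) = \{\mu \text{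 multilinear form } G_1 \times \cdots \times G_k \to \mathbb{F}_p : \|f\omega^{\mu}\|_{\square^k} \geq \varepsilon\}$. The $O(\cdot)$ constants are absolute (may depend on $k$ only through the implicit constants as in the paper). *)

(* Defs.v *)
From mathcomp Require Import all_boot all_order all_algebra.
From mathcomp Require Import complex.
From mathcomp Require Import all_classical all_reals all_analysis.
Set Implicit Arguments. Unset Strict Implicit. Unset Printing Implicit Defensive.
Import Order.TTheory GRing.Theory Num.Theory.
Local Open Scope ring_scope.
Local Open Scope complex_scope.

Section Defs.
Variable R : realType.

Definition pt (p k : nat) (n : 'I_k -> nat) : finType :=
  {dffun forall i : 'I_k, 'rV['F_p]_(n i)}.

Definition avg (T : finType) (F : T -> R[i]) : R[i] :=
  (#|T|%:R)^-1 * \sum_(t : T) F t.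

Definition upd p k (n : 'I_k -> nat) (x : pt p n) (i : 'I_k) (v : 'rV['F_p]_(n i))
  : pt p n := [ffun j => @dfwith _ (fun j : 'I_k => 'rV['F_p]_(n j)) (fun j => x j) i v j].

Definition multilinear p k (n : 'I_k -> nat) (mu : pt p n -> 'F_p) : Prop :=
  forall (i : 'I_k) (x : pt p n) (a : 'F_p) (u v : 'rV['F_p]_(n i)),
    mu (upd x (a *: u + v)) = a * mu (upd x u) + mu (upd x v).

Definition omega (p : nat) : R[i] :=
  (cos (2 * pi / p%:R)) +i* (sin (2 * pi / p%:R)).

(* omega^mu for an F_p-valued function; F_p elements are residues 0..p-1 *)
Definition omega_pow {p : nat} (a : 'F_p) : R[i] := omega p ^+ (nat_of_ord a).

Definition bias p k (n : 'I_k -> nat) (beta : pt p n -> 'F_p) : R[i] :=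
  avg (fun x : pt p n => omega_pow (beta x)).

Definition mix p k (n : 'I_k -> nat) (I : {set 'I_k}) (x y : pt p n) : pt p n :=
  [ffun i => if i \in I then x i else y i].

Definition box_pow p k (n : 'I_k -> nat) (g : pt p n -> R[i]) : R[i] :=
  avg (fun xy : pt p n * pt p n =>
         \prod_(I : {set 'I_k}) iter #|I| (@conjc R) (g (mix I xy.1 xy.2))).

(* ||g||_{box^k}, the (2^k)-th root of the (real, nonnegative) quantity above *)
Definition box_norm p k (n : 'I_k -> nat) (g : pt p n -> R[i]) : R :=
  powR (complex.Re (box_pow g)) (2 ^- k).

Definition spec_ml p k (n : 'I_k -> nat) (eps : R) (f : pt p n -> R[i])
  (mu : pt p n -> 'F_p) : Prop :=
  multilinear mu /\ eps <= box_norm (fun x => f x * omega_pow (mu x)).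

End Defs.

Arguments bias {R p k n} beta.
Arguments omega {R} p.

(* Main.v *)
Require Import Defs.
From mathcomp Require Import all_boot all_order all_algebra.
From mathcomp Require Import complex.
From mathcomp Require Import all_classical all_reals all_analysis.
From mathcomp Require Import ring lra.
Import Order.TTheory GRing.Theory Num.Theory.
Local Open Scope ring_scope.
Local Open Scope complex_scope.

Section Omega.
Variable R : realType.
Variable p : nat.
Hypothesis hp : prime p.

Let th : R := 2 * pi / p%:R.

Lemma omega_expn m : (omega p : R[i]) ^+ m = cos (m%:R * th) +i* sin (m%:R * th).
Proof.
elim: m => [|m IH]; first by rewrite expr0 !mul0r cos0 sin0.
rewrite exprS IH /omega -/th.
have -> : (m.+1)%:R * th = th + m%:R * th by rewrite -nat1r mulrDl mul1r.
rewrite cosD sinD.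
apply/eqP; rewrite eq_complex /=; apply/andP; split; apply/eqP; ring.
Qed.

Lemma omega_p : (omega p : R[i]) ^+ p = 1.
Proof.
rewrite omega_expn /th.
have p0 : (p%:R : R) != 0 by rewrite pnatr_eq0 -lt0n prime_gt0.
rewrite mulrCA divff // mulr1 mulr_natl cos2pi sin2pi //.
Qed.

Lemma omega_conj : (omega p : R[i]) * (omega p)^*%C = 1.
Proof.
rewrite /omega -/th /=.
have h := cos2Dsin2 th.
apply/eqP; rewrite eq_complex /=; apply/andP; split; apply/eqP.
  by rewrite -h; ring.
by rewrite mulrN mulrC addrC subrr.
Qed.

End Omega.

Lemma omega_powD (R : realType) (p : nat) (hp : prime p) (a b : 'F_p) :
  omega_pow R (a + b) = omega_pow R a * omega_pow R b.
Proof.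
rewrite /omega_pow -exprD.
have -> : nat_of_ord (a + b) = ((a + b)%N %% p)%N.
  by rewrite /=; set m := addn _ _; clearbody m; rewrite (Fp_cast hp).
by rewrite {2}(divn_eq (a + b) p) exprD mulnC exprM omega_p // expr1n mul1r.
Qed.

Section Avg.
Variable R : realType.
Local Notation C := (R[i]).

Lemma card_neq0 (T : finType) (t : T) : (#|T|%:R : C) != 0.
Proof. by rewrite pnatr_eq0 -lt0n; apply/card_gt0P; exists t. Qed.

Lemma eq_avg (T : finType) (F G : T -> C) : (forall t, F t = G t) -> avg F = avg G.
Proof. by move=> h; rewrite /avg; congr (_ * _); apply: eq_bigr => t _. Qed.

Lemma avg_const (T : finType) (t0 : T) (c : C) : avg (fun _ : T => c) = c.
Proof.
rewrite /avg sumr_const -[c *+ _]mulr_natl mulrA mulVf ?mul1r // pnatr_eq0 -lt0n; by apply/card_gt0P; exists t0.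
Qed.

Lemma avgB (T : finType) (F G : T -> C) : avg (fun t => F t - G t) = avg F - avg G.
Proof. by rewrite /avg sumrB mulrBr. Qed.

Lemma avgD (T : finType) (F G : T -> C) : avg (fun t => F t + G t) = avg F + avg G.
Proof. by rewrite /avg big_split mulrDr. Qed.

Lemma avg_mull (T : finType) (c : C) (F : T -> C) : avg (fun t => c * F t) = c * avg F.
Proof. by rewrite /avg -mulr_sumr mulrCA. Qed.

Lemma avg_mulr (T : finType) (c : C) (F : T -> C) : avg (fun t => F t * c) = avg F * c.
Proof. by rewrite /avg -mulr_suml mulrA. Qed.

Lemma avg_ge0 (T : finType) (F : T -> C) : (forall t, 0 <= F t) -> 0 <= avg F.
Proof.
move=> h; rewrite /avg mulr_ge0 ?invr_ge0 ?ler0n //.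
by apply: sumr_ge0 => t _.
Qed.

Lemma avg_swap (A B : finType) (F : A -> B -> C) :
  avg (fun a => avg (fun b => F a b)) = avg (fun b => avg (fun a => F a b)).
Proof.
rewrite /avg !mulr_sumr.
transitivity (\sum_(a : A) \sum_(b : B) ((#|A|%:R : C)^-1 * (#|B|%:R)^-1 * F a b)).
  apply: eq_bigr => a _; by rewrite mulrA mulr_sumr.
rewrite [LHS]exchange_big /=; apply: eq_bigr => b _.
by rewrite mulrA (mulrC (#|B|%:R)^-1) mulr_sumr.
Qed.

Lemma avg_pair (A B : finType) (F : A -> B -> C) :
  avg (fun ab : A * B => F ab.1 ab.2) = avg (fun a => avg (fun b => F a b)).
Proof.
rewrite /avg card_prod natrM invfM -pair_bigA /= !mulr_sumr.
by apply: eq_bigr => a _; rewrite mulrA.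
Qed.

Lemma avg_conj (T : finType) (F : T -> C) : (avg F)^*%C = avg (fun t => (F t)^*%C).
Proof. by rewrite /avg rmorphM rmorph_sum /= conjc_inv conjc_nat. Qed.

Lemma avg_comm3 (A B D : finType) (F : A -> B -> D -> C) :
  avg (fun a => avg (fun b => avg (fun d => F a b d))) =
  avg (fun d => avg (fun a => avg (fun b => F a b d))).
Proof.
under eq_avg do rewrite avg_swap.
by rewrite avg_swap.
Qed.


Lemma avg_swap2 (A B D E : finType) (F : A -> B -> D -> E -> C) :
  avg (fun a => avg (fun b => avg (fun d => avg (fun e => F a b d e)))) =
  avg (fun d => avg (fun e => avg (fun a => avg (fun b => F a b d e)))).
Proof.
transitivity (avg (fun a => avg (fun d => avg (fun b => avg (fun e => F a b d e))))).
  by apply: eq_avg => a; rewrite avg_swap.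
by rewrite avg_swap; apply: eq_avg => d; rewrite avg_comm3.
Qed.

Lemma avg_comm5 (A B D E G : finType) (F : A -> B -> D -> E -> G -> C) :
  avg (fun x => avg (fun y => avg (fun u => avg (fun a => avg (fun b => F x y u a b))))) =
  avg (fun u => avg (fun a => avg (fun b => avg (fun x => avg (fun y => F x y u a b))))).
Proof.
rewrite avg_comm3; apply: eq_avg => u; exact: avg_swap2.
Qed.

Lemma triple (A B D : finType) (ch : A -> C) (Q1 : B -> C) (Q2 : D -> C) :
  avg ch * (avg Q1 * avg Q2) =
  avg (fun u => avg (fun a => avg (fun b => Q1 a * Q2 b * ch u))).
Proof.
transitivity (avg (fun u => avg (fun a => avg (fun b => Q1 a * Q2 b)) * ch u)).
  rewrite avg_mull mulrC; congr (_ * _).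
  rewrite -avg_mulr; apply: eq_avg => a; by rewrite avg_mull.
apply: eq_avg => u; rewrite -avg_mulr; apply: eq_avg => a; by rewrite -avg_mulr.
Qed.

End Avg.
Arguments avg_const {R T} t0 c.
Arguments avg_pair {R A B} F.
Arguments avg_swap {R A B} F.
Arguments avg_comm3 {R A B D} F.
Arguments eq_avg {R T F G}.

Section Main.
Variables (R : realType) (p k : nat) (n : 'I_k -> nat).
Hypothesis hp : prime p.
Local Notation T := (pt p n).
Local Notation C := (R[i]).
Local Notation om := (omega_pow R).
Local Notation V j := ('rV['F_p]_(n j)).

Definition cj (m : nat) (w : C) := iter m (@conjc R) w.

Lemma cjM m a b : cj m (a * b) = cj m a * cj m b.
Proof. by elim: m => //= m IH; rewrite IH rmorphM. Qed.

Lemma cjJ m a : cj m (a^*%C) = (cj m a)^*%C.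
Proof. by elim: m => //= m ->. Qed.

Lemma cj1 m : cj m 1 = 1.
Proof. by elim: m => //= m ->; rewrite rmorph1. Qed.

Lemma cjS m a : cj m.+1 a = (cj m a)^*%C.
Proof. by []. Qed.

Lemma upd_eq (x : T) j (v : V j) : upd x v j = v.
Proof. by rewrite /upd ffunE dfwithin. Qed.

Lemma upd_neq (x : T) j (v : V j) i : j != i -> upd x v i = x i.
Proof. by move=> h; rewrite /upd ffunE dfwithout. Qed.

Lemma upd_upd (x : T) j (a b : V j) : upd (upd x a) b = upd x b.
Proof.
apply/ffunP => i; case: (eqVneq j i) => [<-|ne]; first by rewrite !upd_eq.
by rewrite !upd_neq.
Qed.

Lemma upd_self (x : T) j : upd x (x j) = x.
Proof.
apply/ffunP => i; case: (eqVneq j i) => [<-|ne]; first by rewrite !upd_eq.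
by rewrite !upd_neq.
Qed.

Lemma avg_bij (A : finType) (h : A -> A) (F : A -> C) :
  bijective h -> avg (fun a => F (h a)) = avg F.
Proof. by move=> /bij_inj hi; rewrite /avg [in RHS](reindex_inj hi). Qed.

Lemma avg_upd j (F : T -> C) :
  avg F = avg (fun x => avg (fun b : V j => F (upd x b))).
Proof.
rewrite -(avg_pair (fun x (b : V j) => F (upd x b))).
pose phi := fun yc : (T * V j)%type => (upd yc.1 yc.2, yc.1 j).
have bphi : bijective phi.
  by exists phi; case=> y c; rewrite /phi /= upd_eq upd_upd upd_self.
rewrite -(@avg_bij _ phi (fun xb : (T * V j)%type => F (upd xb.1 xb.2)) bphi) /phi /=.
rewrite (eq_avg (G := fun yc : (T * V j)%type => F yc.1)); last first.
  by move=> yc; rewrite upd_upd upd_self.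
rewrite (avg_pair (fun (y : T) (c : V j) => F y)).
by apply: eq_avg => y; rewrite (avg_const 0).
Qed.


Lemma prod_split (S : {set 'I_k}) j (F : {set 'I_k} -> C) : j \in S ->
  \prod_(I : {set 'I_k} | I \subset S) F I =
  \prod_(J : {set 'I_k} | J \subset S :\ j) (F J * F (j |: J)).
Proof.
move=> jS; rewrite (bigID (fun I : {set 'I_k} => j \in I) (fun I : {set 'I_k} => I \subset S)) /= mulrC big_split /=.
congr (_ * _).
  by apply: eq_bigl => I; rewrite finset.subsetD1.
rewrite (reindex_onto (fun J => j |: J) (fun I => I :\ j)) /=; last first.
  by move=> I /andP[_ jI]; rewrite finset.setD1K.
apply: eq_bigl => J; apply/idP/idP.
  by case/andP => [/andP[sub _] /eqP <-]; rewrite finset.setSD.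
case/finset.subsetD1P => sJ jJ.
by rewrite finset.subUset finset.sub1set jS sJ finset.setU11 finset.setU1K // eqxx.
Qed.


Definition mixZ (S : {set 'I_k}) (z : T) (I : {set 'I_k}) (x y : T) : T :=
  [ffun i => if i \in I then x i else if i \in S then y i else z i].
Definition ins (S : {set 'I_k}) (z x : T) : T :=
  [ffun i => if i \in S then x i else z i].
Definition BoxZ (S : {set 'I_k}) (z : T) (h : T -> C) : C :=
  avg (fun xy : (T * T)%type =>
    \prod_(I : {set 'I_k} | I \subset S) cj #|I| (h (mixZ S z I xy.1 xy.2))).
Definition BiasZ (S : {set 'I_k}) (z : T) (g : T -> 'F_p) : C :=
  avg (fun x : T => om (g (ins S z x))).
Definition Qf (S : {set 'I_k}) (j : 'I_k) (z : T) (g : T -> C) (x y : T) (a : V j) : C :=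
  \prod_(J : {set 'I_k} | J \subset S :\ j) cj #|J| (g (upd (mixZ (S :\ j) z J x y) a)).

Lemma mixZ_y (S : {set 'I_k}) (j : 'I_k) (z : T) (J : {set 'I_k}) (x y : T) : j \in S -> J \subset S :\ j ->
  mixZ S z J x y = upd (mixZ (S :\ j) z J x y) (y j).
Proof.
move=> jS /finset.subsetD1P [sJ jJ].
apply/ffunP => i; case: (eqVneq j i) => [<-|ne].
  by rewrite upd_eq ffunE (negbTE jJ) jS.
by rewrite upd_neq // !ffunE finset.in_setD1 eq_sym ne.
Qed.

Lemma mixZ_x (S : {set 'I_k}) (j : 'I_k) (z : T) (J : {set 'I_k}) (x y : T) : j \in S -> J \subset S :\ j ->
  mixZ S z (j |: J) x y = upd (mixZ (S :\ j) z J x y) (x j).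
Proof.
move=> jS /finset.subsetD1P [sJ jJ].
apply/ffunP => i; case: (eqVneq j i) => [<-|ne].
  by rewrite upd_eq ffunE finset.setU11.
by rewrite upd_neq // !ffunE finset.in_setD1 finset.in_setU1 eq_sym (negbTE ne).
Qed.

Lemma Qf_updx (S : {set 'I_k}) (j : 'I_k) (z : T) (g : T -> C) (x y : T) (b a : V j) : Qf S j z g (upd x b) y a = Qf S j z g x y a.
Proof.
apply: eq_bigr => J _; congr (cj _ (g _)).
apply/ffunP => i; case: (eqVneq j i) => [<-|ne]; first by rewrite !upd_eq.
by rewrite !upd_neq // ffunE [RHS]ffunE upd_neq.
Qed.

Lemma Qf_updy (S : {set 'I_k}) (j : 'I_k) (z : T) (g : T -> C) (x y : T) (b a : V j) : Qf S j z g x (upd y b) a = Qf S j z g x y a.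
Proof.
apply: eq_bigr => J _; congr (cj _ (g _)).
apply/ffunP => i; case: (eqVneq j i) => [<-|ne]; first by rewrite !upd_eq.
by rewrite !upd_neq // ffunE [RHS]ffunE upd_neq.
Qed.

Lemma BoxZ_repr (S : {set 'I_k}) (j : 'I_k) (z : T) (g : T -> C) : j \in S ->
  BoxZ S z g = avg (fun x : T => avg (fun y : T =>
     avg (fun a : V j => Qf S j z g x y a) * (avg (fun a : V j => Qf S j z g x y a))^*%C)).
Proof.
move=> jS; rewrite /BoxZ.
transitivity (avg (fun xy : (T * T)%type =>
    Qf S j z g xy.1 xy.2 (xy.2 j) * (Qf S j z g xy.1 xy.2 (xy.1 j))^*%C)).
  apply: eq_avg => -[x y] /=.
  rewrite (prod_split _ _ _ jS) /Qf rmorph_prod -big_split /=.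
  apply: eq_bigr => J hJ.
  have jJ : j \notin J by case/finset.subsetD1P: hJ.
  by rewrite (mixZ_y _ _ _ _ _ _ jS hJ) (mixZ_x _ _ _ _ _ _ jS hJ) finset.cardsU1 jJ add1n cjS.
rewrite (avg_pair (fun x y => Qf S j z g x y (y j) * (Qf S j z g x y (x j))^*%C)).
rewrite [LHS](avg_upd j); apply: eq_avg => x.
rewrite (eq_avg (G := fun b : V j => avg (fun y : T => Qf S j z g x y (y j) * (Qf S j z g x y b)^*%C))); last first.
  by move=> b; apply: eq_avg => y; rewrite !Qf_updx upd_eq.
rewrite avg_swap [LHS](avg_upd j); apply: eq_avg => y.
rewrite (eq_avg (G := fun a : V j => avg (fun b : V j => Qf S j z g x y a * (Qf S j z g x y b)^*%C))); last first.
  by move=> a; apply: eq_avg => b; rewrite !Qf_updy upd_eq.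
rewrite avg_conj -avg_mulr; apply: eq_avg => a.
by rewrite avg_mull.
Qed.


Definition chi (S : {set 'I_k}) (j : 'I_k) (z : T) (ga : T -> 'F_p) (x y : T) (a : V j) : C :=
  \prod_(J : {set 'I_k} | J \subset S :\ j) cj #|J| (om (ga (upd (mixZ (S :\ j) z J x y) a))).

Lemma Qf_phase (S : {set 'I_k}) (j : 'I_k) (z : T) (g : T -> C) (ga : T -> 'F_p) (x y : T) (a : V j) :
  Qf S j z (fun w => g w * om (ga w)) x y a = Qf S j z g x y a * chi S j z ga x y a.
Proof. by rewrite /Qf /chi -big_split; apply: eq_bigr => J _; rewrite cjM. Qed.

Lemma chi_mul (S : {set 'I_k}) (j : 'I_k) (z : T) (ga : T -> 'F_p) (x y : T) (a b : V j) :
  multilinear ga -> chi S j z ga x y (a + b) = chi S j z ga x y a * chi S j z ga x y b.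
Proof.
move=> hga; rewrite /chi -big_split; apply: eq_bigr => J _.
rewrite /= -cjM -omega_powD //; congr (cj _ (om _)).
by have := hga j (mixZ (S :\ j) z J x y) 1 a b; rewrite scale1r mul1r.
Qed.

Lemma orth {j : 'I_k} (ch : V j -> C) : (forall a b, ch (a + b) = ch a * ch b) ->
  (forall a, ch a = 1) \/ avg ch = 0.
Proof.
move=> hm; case: (boolP [forall a, ch a == 1]) => [/forallP h|/forallPn [a0 ha0]].
  by left => a; apply/eqP.
right.
have bij : bijective (fun a : V j => a + a0).
  by exists (fun a => a - a0) => a; rewrite ?addrK ?subrK.
have e : avg ch = avg ch * ch a0.
  transitivity (avg (fun a => ch (a + a0))); first by rewrite (@avg_bij _ _ ch bij).
  rewrite -avg_mulr; apply: eq_avg => a; exact: hm.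
have : avg ch * (1 - ch a0) = 0 by rewrite mulrBr mulr1 -e subrr.
move/eqP; rewrite mulf_eq0 subr_eq0; case/orP => [/eqP //|].
by rewrite eq_sym (negbTE ha0).
Qed.

Lemma key_pw j (Q ch : V j -> C) : (forall a b, ch (a + b) = ch a * ch b) ->
  0 <= avg (fun a => Q a * ch a) * (avg (fun a => Q a * ch a))^*%C
       - avg ch * (avg Q * (avg Q)^*%C).
Proof.
move=> hm; case: (orth _ hm) => [h|->]; last by rewrite mul0r subr0 mulcJ_ge0.
have -> : avg ch = 1 by rewrite (eq_avg (G := fun _ => 1)) // (avg_const 0).
rewrite (eq_avg (G := Q)) ?mul1r ?subrr //.
by move=> a; rewrite h mulr1.
Qed.


Lemma mixZ_z (S : {set 'I_k}) (j : 'I_k) (z : T) (J : {set 'I_k}) (x y : T) (u : V j) :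
  j \notin S -> J \subset S ->
  mixZ S (upd z u) J x y = upd (mixZ S z J x y) u.
Proof.
move=> jS sJ; have jJ : j \notin J by apply/negP => /(fintype.subsetP sJ); apply/negP.
apply/ffunP => i; case: (eqVneq j i) => [<-|ne].
  by rewrite upd_eq ffunE (negbTE jJ) (negbTE jS) upd_eq.
by rewrite upd_neq // ffunE [RHS]ffunE upd_neq.
Qed.

Definition H (j : 'I_k) (g : T -> C) (a b : V j) (w : T) : C :=
  g (upd w a) * (g (upd w b))^*%C.

Lemma BoxZ_H (S : {set 'I_k}) (j : 'I_k) (z : T) (g : T -> C) (ph : T -> C) (u a b : V j) :
  BoxZ (S :\ j) (upd z u) (fun w => H j g a b w * ph w) =
  avg (fun x : T => avg (fun y : T => Qf S j z g x y a * (Qf S j z g x y b)^*%C *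
     \prod_(J : {set 'I_k} | J \subset S :\ j) cj #|J| (ph (upd (mixZ (S :\ j) z J x y) u)))).
Proof.
rewrite /BoxZ -(avg_pair (fun x y => Qf S j z g x y a * (Qf S j z g x y b)^*%C *
     \prod_(J : {set 'I_k} | J \subset S :\ j) cj #|J| (ph (upd (mixZ (S :\ j) z J x y) u)))).
apply: eq_avg => -[x y] /=.
rewrite /Qf rmorph_prod -!big_split /=; apply: eq_bigr => J hJ.
rewrite mixZ_z ?finset.setD11 // /H !upd_upd !cjM cjJ //.
Qed.

Lemma ins_upd (S : {set 'I_k}) (j : 'I_k) (z x : T) (u : V j) : j \in S ->
  ins S z (upd x u) = ins (S :\ j) (upd z u) x.
Proof.
move=> jS; apply/ffunP => i; case: (eqVneq j i) => [<-|ne].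
  by rewrite ffunE [RHS]ffunE jS finset.setD11 !upd_eq.
by rewrite ffunE [RHS]ffunE finset.in_setD1 eq_sym ne /=; case: ifP => _; rewrite upd_neq.
Qed.

Lemma BiasZ_avg (S : {set 'I_k}) (j : 'I_k) (z : T) (ga : T -> 'F_p) : j \in S ->
  avg (fun u : V j => BiasZ (S :\ j) (upd z u) ga) = BiasZ S z ga.
Proof.
move=> jS; rewrite /BiasZ [RHS](avg_upd j).
under [RHS]eq_avg => x do under eq_avg => u do rewrite (ins_upd _ _ _ _ _ jS).
by rewrite avg_swap.
Qed.


Lemma BoxZ0 (z : T) (h : T -> C) : BoxZ finset.set0 z h = h z.
Proof.
rewrite /BoxZ (eq_avg (G := fun _ => h z)) ?(avg_const (z, z)) // => -[x y] /=.
rewrite (eq_bigl (fun I => I == finset.set0)); last first.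
  by move=> I; rewrite finset.subset0.
rewrite big_pred1_eq finset.cards0 /cj /=.
by congr (h _); apply/ffunP => i; rewrite !ffunE !finset.in_set0.
Qed.

Lemma BiasZ0 (z : T) (ga : T -> 'F_p) : BiasZ finset.set0 z ga = om (ga z).
Proof.
rewrite /BiasZ (eq_avg (G := fun _ => om (ga z))) ?(avg_const z) // => x.
by congr (om (ga _)); apply/ffunP => i; rewrite !ffunE finset.in_set0.
Qed.


Lemma claim m : forall S : {set 'I_k}, #|S| = m ->
  forall (z : T) (g : T -> C) (ga : T -> 'F_p), multilinear ga ->
  0 <= BoxZ S z (fun w => g w * om (ga w)) - BiasZ S z ga * BoxZ S z g.
Proof.
elim: m => [|m IH] S hS z g ga hga.
  by rewrite (finset.cards0_eq hS) !BoxZ0 BiasZ0 mulrC subrr.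
have [j jS] : exists j, j \in S.
  by apply/finset.set0Pn; rewrite -finset.card_gt0 hS.
have hS' : #|S :\ j| = m.
  by move: hS; rewrite (finset.cardsD1 j) jS add1n => -[].
pose Qg := Qf S j z g.
pose ch := chi S j z ga.
pose M := avg (fun x : T => avg (fun y : T => avg (ch x y) *
            (avg (Qg x y) * (avg (Qg x y))^*%C))).
pose Bs := avg (fun u : V j => avg (fun a : V j => avg (fun b : V j =>
   BiasZ (S :\ j) (upd z u) ga * BoxZ (S :\ j) (upd z u) (H j g a b)))).
pose Ms := avg (fun u : V j => avg (fun a : V j => avg (fun b : V j =>
   BoxZ (S :\ j) (upd z u) (fun w => H j g a b w * om (ga w))))).
have e1 : BoxZ S z (fun w => g w * om (ga w)) =
   avg (fun x : T => avg (fun y : T => avg (fun a => Qg x y a * ch x y a) *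
      (avg (fun a => Qg x y a * ch x y a))^*%C)).
  rewrite (BoxZ_repr _ j _ _ jS); apply: eq_avg => x; apply: eq_avg => y.
  by rewrite (eq_avg (G := fun a => Qg x y a * ch x y a)) // => a; exact: Qf_phase.
have eM : M = Ms.
  rewrite /Ms.
  transitivity (avg (fun u : V j => avg (fun a : V j => avg (fun b : V j =>
     avg (fun x : T => avg (fun y : T => Qg x y a * (Qg x y b)^*%C * ch x y u)))))).
    rewrite -avg_comm5; apply: eq_avg => x; apply: eq_avg => y.
    by rewrite avg_conj triple.
  apply: eq_avg => u; apply: eq_avg => a; apply: eq_avg => b.
  by rewrite BoxZ_H.
have eB : Bs = BiasZ S z ga * BoxZ S z g.
  rewrite -(BiasZ_avg _ _ z ga jS) /Bs (BoxZ_repr _ j _ _ jS).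
  transitivity (avg (fun u : V j => BiasZ (S :\ j) (upd z u) ga *
     avg (fun a : V j => avg (fun b : V j => avg (fun x : T => avg (fun y : T =>
       Qg x y a * (Qg x y b)^*%C)))))).
    apply: eq_avg => u; rewrite -avg_mull; apply: eq_avg => a; rewrite -avg_mull.
    apply: eq_avg => b; congr (_ * _).
    have -> : H j g a b = (fun w => H j g a b w * (fun _ => 1) w).
      by apply: funext => w; rewrite mulr1.
    rewrite BoxZ_H; apply: eq_avg => x; apply: eq_avg => y.
    by rewrite big1 ?mulr1 // => J _; rewrite cj1.
  rewrite avg_mulr; congr (_ * _).
  rewrite avg_swap2; apply: eq_avg => x; apply: eq_avg => y.
  rewrite avg_conj -avg_mulr; apply: eq_avg => a; by rewrite avg_mull.
rewrite e1 -eB.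
have -> : forall X : C, X - Bs = (X - M) + (M - Bs) by move=> X; rewrite addrA subrK.
apply: addr_ge0.
  rewrite -avgB; apply: avg_ge0 => x; rewrite -avgB; apply: avg_ge0 => y.
  apply: key_pw => a b; exact: chi_mul.
rewrite eM /Ms /Bs -avgB; apply: avg_ge0 => u; rewrite -avgB; apply: avg_ge0 => a.
rewrite -avgB; apply: avg_ge0 => b.
exact: IH.
Qed.


Lemma box_powE (z : T) (g : T -> C) : box_pow g = BoxZ [set: 'I_k] z g.
Proof.
rewrite /box_pow /BoxZ; apply: eq_avg => -[x y] /=.
rewrite [in RHS](eq_bigl (fun I : {set 'I_k} => true)); last by move=> I; rewrite finset.subsetT.
apply: eq_bigr => I _; congr (cj _ (g _)).
by apply/ffunP => i; rewrite !ffunE finset.in_setT.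
Qed.

Lemma biasE (z : T) (ga : T -> 'F_p) : bias ga = BiasZ [set: 'I_k] z ga.
Proof.
rewrite /bias /BiasZ; apply: eq_avg => x; congr (om (ga _)).
by apply/ffunP => i; rewrite !ffunE finset.in_setT.
Qed.

Lemma box_pow_ge0 (j : 'I_k) (g : T -> C) : 0 <= box_pow g.
Proof.
rewrite (box_powE [ffun i => 0]) (BoxZ_repr _ j) ?finset.in_setT //.
apply: avg_ge0 => x; apply: avg_ge0 => y; exact: mulcJ_ge0.
Qed.

Lemma om_conj (s : 'F_p) : om s * (om s)^*%C = 1.
Proof.
by rewrite /omega_pow rmorphXn -exprMn omega_conj expr1n.
Qed.

Lemma om0 : om (0 : 'F_p) = 1.
Proof. by rewrite /omega_pow expr0. Qed.

Lemma om_opp (s : 'F_p) : om (- s) = (om s)^*%C.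
Proof.
have h : om (- s) * om s = 1 by rewrite -omega_powD // addNr om0.
by rewrite -[om (- s)]mulr1 -(om_conj s) mulrA h mul1r.
Qed.

Lemma norm_om (s : 'F_p) : `|om s| = 1.
Proof.
apply/eqP; rewrite -sqrp_eq1 ?normr_ge0 //.
by rewrite normCK om_conj.
Qed.

Lemma bias_norm (ga : T -> 'F_p) : `|bias (R:=R) ga| <= 1.
Proof.
have c0 : (#|T|%:R : C) != 0.
  by rewrite pnatr_eq0 -lt0n; apply/card_gt0P; exists [ffun i => 0].
rewrite /bias /avg normrM ger0_norm ?invr_ge0 ?ler0n //.
have h : `|\sum_(x : T) om (ga x)| <= #|T|%:R.
  apply: le_trans; first exact: ler_norm_sum.
  under eq_bigr do rewrite norm_om.
  by rewrite sumr_const.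
rewrite -[X in _ <= X](mulVf c0); apply: ler_wpM2l => //.
Qed.

End Main.

Lemma final_ineq (R : realType) (k : nat) (P c eps XB BB bR : R) :
  1 < P -> 0 < c -> c <= 1 -> 0 < eps -> 0 <= BB -> c <= bR -> bR * BB <= XB ->
  eps <= powR BB (2 ^- k) ->
  eps * powR P (- (1 * powR (ln c^-1 / ln P) 1)) <= powR XB (2 ^- k).
Proof.
move=> P1 c0 c1 e0 B0 cb hX he.
have r0 : 0 <= (2 ^- k : R) by rewrite invr_ge0 exprn_ge0.
have r1 : (2 ^- k : R) <= 1.
  by rewrite invf_le1 ?exprn_gt0 // exprn_ege1 // ler1n.
have lnP : 0 < ln P by apply: ln_gt0.
have L0 : 0 <= ln c^-1 / ln P.
  by rewrite divr_ge0 // ?ln_ge0 // ?invf_ge1 // ltW.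
rewrite mul1r powRr1 // powRN.
have ec : powR P (ln c^-1 / ln P) = c^-1.
  rewrite /powR (negbTE (lt0r_neq0 (lt_trans ltr01 P1))) divfK ?lt0r_neq0 //.
  by rewrite lnK // posrE invr_gt0.
rewrite ec invrK.
have XBge : c * BB <= XB by apply: le_trans hX; apply: ler_wpM2r.
apply: (@le_trans _ _ (powR c (2 ^- k) * powR BB (2 ^- k))).
  rewrite mulrC; apply: ler_pM => //; [exact: ltW | exact: ltW |].
  by apply: ger1_powR => //; rewrite c0 c1.
rewrite -powRM ?(ltW c0) //; apply: ge0_ler_powR => //; rewrite nnegrE ?mulr_ge0 ?(ltW c0) //.
by apply: le_trans XBge; rewrite mulr_ge0 ?(ltW c0).
Qed.

Theorem lemma31 (R : realType) (k : nat) (hk : (1 <= k)%N) :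
  exists C1 C2 : R, 0 < C1 /\ 0 < C2 /\
  forall (p : nat) (hp : prime p) (n : 'I_k -> nat) (f : pt p n -> R[i])
         (c eps : R) (alpha alpha' : pt p n -> 'F_p),
    (forall x, `|f x| <= 1) ->
    0 < c -> 0 < eps ->
    multilinear alpha -> multilinear alpha' ->
    c%:C <= bias (fun x => alpha x - alpha' x) ->
    spec_ml eps f alpha ->
    spec_ml (eps * powR p%:R (- (C1 * powR (ln c^-1 / ln p%:R) C2))) f alpha'.
Proof.
exists 1, 1; split; first exact: ltr01; split; first exact: ltr01.
move=> p hp n f c eps al al' hf hc heps hal hal' hb [_ hsp].
split => //.
have j : 'I_k := Ordinal hk.
pose z : pt p n := [ffun i => 0].
pose ga := fun x => al' x - al x.
have mga : multilinear ga.
  move=> i x a u v; rewrite /ga hal hal'.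
  by rewrite mulrBr opprD addrACA.
have e1 : (fun x => f x * omega_pow R (al' x)) =
    (fun w => (fun x => f x * omega_pow R (al x)) w * omega_pow R (ga w)).
  apply: funext => x; rewrite -mulrA -omega_powD //; congr (_ * omega_pow R _).
  by rewrite /ga addrC subrK.
have hcl : 0 <= box_pow (fun x => f x * omega_pow R (al' x)) -
    bias ga * box_pow (fun x => f x * omega_pow R (al x)).
  rewrite e1 !(box_powE R p k n z) (biasE R p k n z).
  exact: (claim R p k n hp _ [set: 'I_k] (erefl _) z _ ga mga).
set b := bias (fun x => al x - al' x) in hb.
move: (hb); rewrite lecE => /andP[/eqP Imb cb].
have breal : b = (complex.Re b)%:C.
  by rewrite [LHS]complexE Imb /= mulr0 addr0.
have eb : bias ga = b.
  transitivity (b^*%C); last by rewrite breal conjc_real.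
  rewrite /b /bias avg_conj; apply: eq_avg => x.
  by rewrite /ga -opprB (om_opp R p hp).
rewrite eb in hcl.
set B := box_pow (fun x => f x * omega_pow R (al x)) in hcl hsp.
set X := box_pow (fun x => f x * omega_pow R (al' x)) in hcl *.
have := box_pow_ge0 R p k n j (fun x => f x * omega_pow R (al x)); rewrite -/B.
rewrite lecE => /andP[/eqP ImB B0].
have Breal : B = (complex.Re B)%:C.
  by rewrite [LHS]complexE ImB /= mulr0 addr0.
move: hcl; rewrite breal Breal lecE => /andP[_ hX].
have b0 : 0 <= b by apply: le_trans hb; rewrite ler0c ltW.
have b1 : b <= 1.
  by rewrite -(ger0_norm b0); exact: bias_norm.
move: b1; rewrite lecE => /andP[_ b1].
rewrite /box_norm -/X.
apply: (@final_ineq R k _ _ _ _ (complex.Re B) (complex.Re b)) => //.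
- by rewrite ltr1n prime_gt1.
- by apply: le_trans cb b1.
- by move: hX; rewrite raddfB -rmorphM /= subr_ge0.
Qed.
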